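(* Let $l(x)=x\,(1-2\Phi(-x))+2\phi(x)$. Then for all $x>0$, $$\frac{l(x)\,\big(\tfrac12-\Phi(-x)\big)}{x}<\frac12.$$
   Context: $\phi$ and $\Phi$ denote the standard normal density and cumulative distribution function. *)

(* Defs.v *)
From Stdlib Require Import Reals.
From Coquelicot Require Import Coquelicot.
Open Scope R_scope.

Definition phi (x : R) : R := exp (- x ^ 2 / 2) / sqrt (2 * PI).

Definition Phi (x : R) : R :=
  RInt_gen phi (Rbar_locally m_infty) (at_point x).

Definition l (x : R) : R := x * (1 - 2 * Phi (- x)) + 2 * phi x.

(* Main.v *)
Require Import Defs.
From Stdlib Require Import Reals Lra.
From Coquelicot Require Import Coquelicot.
From HB Require Import structures.
From mathcomp Require all_boot all_order all_algebra.
From mathcomp Require all_classical all_reals all_analysis.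
From mathcomp Require Rstruct Rstruct_topology.
Open Scope R_scope.

Module Bridge.
Import mathcomp.boot.all_boot mathcomp.order.all_order mathcomp.algebra.all_algebra.
Import mathcomp.classical.all_classical mathcomp.reals.all_reals mathcomp.analysis.all_analysis.
Import mathcomp.reals_stdlib.Rstruct mathcomp.analysis_stdlib.Rstruct_topology.
Import Order.TTheory GRing.Theory Num.Theory.
Import numFieldNormedType.Exports.
Local Open Scope classical_set_scope.
Local Open Scope ring_scope.

Lemma bridge (f : R -> R) (x l : R) :
  derivable (f : R^o -> R^o) x 1 -> derive1 (f : R^o -> R^o) x = l -> derivable_pt_lim f x l.
Proof.
move=> df fl.
move: (df) => /cvg_ex [l' Hl'].
have ll : l' = l.
  rewrite -fl derive1E /derive. by rewrite (cvg_lim _ Hl').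
subst l'.
move: Hl'.
move/cvgrPdist_lt => H e e0.
have /H : (0 < e) by apply/RltP.
move=> HH. move: HH => /nbhs_ballP [d /= d0 Hd].
have d0' : (0 < d)%coqR by apply/RltP.
exists (mkposreal d d0') => h h0 hd.
have bh : ball (0:R^o) d h.
  rewrite /ball /= sub0r normrN -RabsE. exact/RltP.
have hn0 : h != 0 by apply/eqP.
have := Hd h bh hn0.
rewrite -RabsE => /RltP.
rewrite /= ?scaler1 ?mulr1.
move=> H'.
replace ((f (x+h) - f x)/h - l)%coqR with (- (l - / h * (f (h + x) - f x)))%coqR.
  rewrite Rabs_Ropp. exact H'.
rewrite (Rplus_comm h x). field. exact h0.
Qed.

Lemma atanE (x : R) : atan x = Ratan.atan x.
Proof.
have D : forall y : R, derivable_pt_lim (fun z => atan z - Ratan.atan z)%coqR y 0%coqR.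
  move=> y.
  have -> : 0%coqR = (/ (1 + y ^ 2) - / (1 + y ^ 2))%coqR by ring.
  apply: (derivable_pt_lim_minus (fun z => atan z) Ratan.atan).
    apply: bridge; first exact: derivable_atan.
    rewrite derive1_atan. by rewrite RinvE RplusE RpowE.
  exact: derivable_pt_lim_atan.
have cst : forall a b : R, (a < b)%coqR -> (atan b - Ratan.atan b = atan a - Ratan.atan a)%coqR.
  move=> a b ab. have [c [Hc _]] := MVT_cor2 _ (fun _ => 0%coqR) a b ab (fun c _ => D c).
  lra.
have E0 : (atan 0 - Ratan.atan 0 = 0)%coqR by rewrite atan0 Ratan.atan_0; apply: Rminus_diag_eq.
suff : (atan x - Ratan.atan x = 0)%coqR by lra.
case: (Rtotal_order x 0) => [h|[->|h]]; first by rewrite (cst x 0 h) in E0.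
  exact: E0.
by rewrite (cst 0 x h).
Qed.

Lemma piE : pi = PI :> R.
Proof.
have := @atan1 R. rewrite atanE Ratan.atan_1.
have h4 : (4%:R : R) = 4%coqR by rewrite -INRE /=; ring.
rewrite h4 -RdivE => h. apply: (Rmult_eq_reg_r (/ 4)%coqR); last lra. symmetry. exact: h.
Qed.

Definition IG (y : R) : R := gauss_integral_proof.integral0_gauss y.

Lemma IG_lim (eps : R) : (0 < eps)%coqR ->
  exists M : R, forall y : R, (M < y)%coqR -> (Rabs (IG y - sqrt PI / 2) < eps)%coqR.
Proof.
move=> e0.
have cvg_Ig : @gauss_integral_proof.integral0_gauss R x @[x --> +oo] --> Num.sqrt pi / 2.
  have : Num.sqrt (@gauss_integral_proof.integral0_gauss R x ^+ 2) @[x --> +oo]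
      --> Num.sqrt (pi / 4).
    apply: continuous_cvg => //;
      [exact: sqrt_continuous|exact: gauss_integral_proof.cvg_integral0_gauss_sqr].
  rewrite sqrtrM ?pi_ge0// sqrtrV// (_ : 4 = 2 ^+ 2); last first.
    by rewrite expr2 -natrM.
  rewrite sqrtr_sqr ger0_norm//.
  rewrite (_ : (fun _ => Num.sqrt _) = gauss_integral_proof.integral0_gauss)//.
  apply/funext => r; rewrite sqrtr_sqr// ger0_norm//.
  exact: gauss_integral_proof.integral0_gauss_ge0.
move/cvgrPdist_lt : cvg_Ig.
have /[swap] /[apply] : (0 < eps) by apply/RltP.
case=> M [_ HM].
exists M => y My.
have My' : M < y by apply/RltP.
have := HM y My'.
rewrite -RabsE -Rabs_Ropp piE -RsqrtE.
move/RltP => H.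
replace (IG y - sqrt PI/2)%coqR with (-(sqrt PI / 2 - IG y))%coqR by (unfold IG; ring).
exact: H.
Qed.

Definition FG (x : R) : R :=
  (\int[lebesgue_measure]_(t in [set` Interval (BLeft (-1)) (BRight x)]) gauss_fun t)%R.

Local Open Scope ring_scope.
Lemma FG_derive (x : R) : (-1 < x)%coqR -> derivable_pt_lim FG x (exp (- x ^ 2)).
Proof.
move=> hx.
have hx' : -1 < x by apply/RltP.
have xu : x < x + 1 by rewrite ltrDl.
have intg : lebesgue_measure.-integrable [set` Interval (BLeft (-1)) (BRight (x + 1))]
    (EFin \o (@gauss_fun R)).
  apply: (integrableS measurableT) => //; exact: integrableT_gauss.
have ax : (BLeft (-1) < BRight x)%O by rewrite bnd_simp ltW.
have H := continuous_FTC1 xu intg.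
have [|d1 d2] := H _ (@continuous_gauss_fun R x).
  by rewrite /= lte_fin.
have -> : exp (- x ^ 2)%coqR = gauss_fun x by rewrite /gauss_fun RexpE RpowE.
have B := @bridge FG x (gauss_fun x) d1 d2. exact B.
Qed.

Lemma IG_FG (y : R) : (0 <= y)%coqR -> IG y = (FG y - FG 0)%coqR.
Proof.
move=> hy.
have hy' : 0 <= y by apply/RleP.
have intg : forall a b : itv_bound R, lebesgue_measure.-integrable [set` Interval a b]
    (EFin \o (@gauss_fun R)).
  move=> a b. apply: (integrableS measurableT) => //; exact: integrableT_gauss.
change (IG y = FG y - FG 0). rewrite /FG.
rewrite (@Rintegral_itvB R gauss_fun (BLeft (-1)) (BRight y) 0) //; last 2 first.
  rewrite Rintegral_itv_obnd_cbnd //.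
by rewrite leBSide /= lerN10.
Qed.

End Bridge.

Lemma s2PI_pos : 0 < sqrt (2 * PI).
Proof. apply sqrt_lt_R0. generalize PI_RGT_0; lra. Qed.

Lemma phi_deriv x : is_derive phi x (- x * phi x).
Proof.
unfold phi. auto_derive.
- generalize s2PI_pos; lra.
- replace (- (x * (x * 1)) * / 2) with (- x ^ 2 / 2) by (unfold Rdiv; ring). field. generalize s2PI_pos; lra.
Qed.

Lemma phi_cont x : continuous phi x.
Proof.
apply (ex_derive_continuous (K:=R_AbsRing) (V:=R_NormedModule)). eexists. apply phi_deriv.
Qed.

Lemma phi_ex a b : ex_RInt phi a b.
Proof. apply (ex_RInt_continuous (V:=R_CompleteNormedModule)). intros z _. apply phi_cont. Qed.

Lemma phi_even x : phi (- x) = phi x.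
Proof. unfold phi. f_equal. f_equal. f_equal. ring. Qed.

Lemma phi_pos x : 0 < phi x.
Proof. unfold phi. apply Rdiv_lt_0_compat. apply exp_pos. apply s2PI_pos. Qed.

Lemma phi_RInt a b : is_RInt phi a b (RInt phi a b).
Proof. apply (RInt_correct (V:=R_CompleteNormedModule)). apply phi_ex. Qed.

Definition H (w : R) := RInt phi 0 w.

Lemma H_derive w : is_derive H w (phi w).
Proof.
apply (is_derive_RInt phi H 0 w).
- apply filter_forall. intro b. apply phi_RInt.
- apply phi_cont.
Qed.


Lemma H_odd w : H (- w) = - H w.
Proof.
assert (h1 : is_RInt (V:=R_NormedModule) (fun y => opp (phi (- y))) 0 w (H (- w))).
  apply (is_RInt_comp_opp (V:=R_NormedModule)). rewrite Ropp_0. apply phi_RInt.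
assert (h2 : is_RInt (V:=R_NormedModule) (fun y => opp (phi y)) 0 w (opp (H w))).
  apply (is_RInt_opp (V:=R_NormedModule)). apply phi_RInt.
apply (is_RInt_ext (V:=R_NormedModule) _ (fun y => opp (phi y))) in h1.
2: { intros x _. rewrite phi_even. reflexivity. }
assert (E1 := is_RInt_unique (V:=R_CompleteNormedModule) _ _ _ _ h1).
assert (E2 := is_RInt_unique (V:=R_CompleteNormedModule) _ _ _ _ h2).
rewrite E1 in E2. exact E2.
Qed.

Definition FGs (w : R) : R := Bridge.FG (w / sqrt 2) / sqrt PI.

Lemma sqrt2_pos : 0 < sqrt 2.
Proof. apply sqrt_lt_R0. lra. Qed.
Lemma sqrtPI_pos : 0 < sqrt PI.
Proof. apply sqrt_lt_R0. apply PI_RGT_0. Qed.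

Lemma FGs_derive w : - sqrt 2 < w -> is_derive FGs w (phi w).
Proof.
intro hw.
assert (h : -1 < w / sqrt 2).
{ generalize sqrt2_pos; intro. apply (Rmult_lt_reg_r (sqrt 2)); auto.
  unfold Rdiv. rewrite Rmult_assoc, Rinv_l; lra. }
assert (d1 := proj2 (is_derive_Reals _ _ _) (Bridge.FG_derive _ h)).
unfold FGs. auto_derive.
- eexists. exact d1.
- replace (Derive (fun x => Bridge.FG x) (w * / sqrt 2)) with (exp (- (w / sqrt 2) ^ 2))
    by (symmetry; apply is_derive_unique; exact d1).
  unfold phi. rewrite sqrt_mult by (try lra; generalize PI_RGT_0; lra).
  replace (- (w / sqrt 2) ^ 2) with (- w ^ 2 / 2).
  + field. split; [generalize sqrtPI_pos|generalize sqrt2_pos]; lra.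
  + unfold Rdiv. rewrite Rpow_mult_distr, pow_inv. replace (sqrt 2 ^ 2) with 2. ring.
    simpl. rewrite Rmult_1_r, sqrt_sqrt; lra.
Qed.

Lemma H_pos w : 0 <= w -> H w = Bridge.IG (w / sqrt 2) / sqrt PI.
Proof.
intro hw.
assert (hr : is_RInt (V:=R_CompleteNormedModule) phi 0 w (minus (FGs w) (FGs 0))).
{ apply (is_RInt_derive (V:=R_CompleteNormedModule) FGs phi 0 w).
  - intros x hx. apply FGs_derive. rewrite Rmin_left in hx by lra.
    generalize sqrt2_pos; lra.
  - intros x _. apply phi_cont. }
unfold H. rewrite (is_RInt_unique (V:=R_CompleteNormedModule) _ _ _ _ hr).
rewrite Bridge.IG_FG.
- unfold FGs, minus, plus, opp. simpl. replace (0 / sqrt 2) with 0 by (unfold Rdiv; ring).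
  field. generalize sqrtPI_pos; lra.
- unfold Rdiv. apply Rmult_le_pos; auto. left. apply Rinv_0_lt_compat, sqrt2_pos.
Qed.

Lemma H_lim eps : 0 < eps -> exists M, forall w, M < w -> Rabs (H w - 1/2) < eps.
Proof.
intro he.
destruct (Bridge.IG_lim (eps * sqrt PI)) as [M HM].
{ apply Rmult_lt_0_compat; auto. apply sqrtPI_pos. }
exists (Rmax 0 (M * sqrt 2)). intros w hw.
assert (w0 : 0 <= w) by (generalize (Rmax_l 0 (M * sqrt 2)); lra).
assert (wM : M < w / sqrt 2).
{ generalize sqrt2_pos; intro. apply (Rmult_lt_reg_r (sqrt 2)); auto.
  unfold Rdiv. rewrite Rmult_assoc, Rinv_l by lra. generalize (Rmax_r 0 (M * sqrt 2)); lra. }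
specialize (HM _ wM).
rewrite H_pos by auto.
replace (Bridge.IG (w / sqrt 2) / sqrt PI - 1 / 2) with ((Bridge.IG (w / sqrt 2) - sqrt PI / 2) / sqrt PI)
  by (field; generalize sqrtPI_pos; lra).
unfold Rdiv at 1. rewrite Rabs_mult, Rabs_Rinv by (generalize sqrtPI_pos; lra).
rewrite (Rabs_right (sqrt PI)) by (generalize sqrtPI_pos; lra).
apply (Rmult_lt_reg_r (sqrt PI)). apply sqrtPI_pos.
rewrite Rmult_assoc, Rinv_l by (generalize sqrtPI_pos; lra). lra.
Qed.

Lemma Derive_H x : Derive H x = phi x.
Proof. apply is_derive_unique, H_derive. Qed.

Lemma Phi_eq z : Phi z = H z + 1 / 2.
Proof.
assert (G : is_RInt_gen (V:=R_NormedModule) (Derive H) (Rbar_locally m_infty) (at_point z) (H z - (- (1/2)))).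
{ apply is_RInt_gen_Derive.
  - apply filter_forall. intros ab x _. eexists. apply H_derive.
  - apply filter_forall. intros ab x _.
    apply (continuous_ext (T:=R_UniformSpace) (U:=R_UniformSpace) phi).
    + intro y. symmetry. apply Derive_H.
    + apply phi_cont.
  - apply filterlim_locally. intro eps.
    destruct (H_lim eps (cond_pos eps)) as [M HM].
    exists (- M). intros y hy.
    change (Rabs (H y - - (1/2)) < eps).
    replace y with (- (- y)) by ring. rewrite H_odd.
    replace (- H (- y) - - (1 / 2)) with (- (H (- y) - 1/2)) by ring.
    rewrite Rabs_Ropp. apply HM. lra.
  - apply filterlim_locally. intro eps. unfold at_point. apply ball_center. }
apply (is_RInt_gen_ext (V:=R_NormedModule) _ phi) in G.
2: { apply filter_forall. intros ab x _. apply Derive_H. }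
unfold Phi. rewrite (is_RInt_gen_unique (V:=R_CompleteNormedModule) _ _ G). ring.
Qed.

Definition mm (y : R) : R := 1/2 - H y - y * phi y / (1 + y ^ 2).

Lemma mm_derive y : is_derive mm y (- 2 * phi y / (1 + y ^ 2) ^ 2).
Proof.
unfold mm. auto_derive.
- split; [eexists; apply H_derive | ]. split; [eexists; apply phi_deriv|].
  split; auto. nra.
- replace (Derive (fun x : R => H x) y) with (phi y) by (symmetry; apply Derive_H).
  replace (Derive (fun x : R => phi x) y) with (- y * phi y)
    by (symmetry; apply is_derive_unique, phi_deriv).
  field. nra.
Qed.

Lemma exp_le1 u : u <= 0 -> exp u <= 1.
Proof.
intro hu. destruct (Req_dec u 0) as [->|hn].
- rewrite exp_0; lra.
- left. rewrite <- exp_0. apply exp_increasing. lra.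
Qed.

Lemma phi_le_c x : phi x <= / sqrt (2 * PI).
Proof.
unfold phi, Rdiv. rewrite <- (Rmult_1_l (/ sqrt (2 * PI))) at 2.
apply Rmult_le_compat_r.
- left. apply Rinv_0_lt_compat, s2PI_pos.
- apply exp_le1. nra.
Qed.

Lemma c_le1 : / sqrt (2 * PI) <= 1.
Proof.
rewrite <- Rinv_1. apply Rinv_le_contravar; [lra|].
rewrite <- sqrt_1. apply sqrt_le_1_alt. generalize PI_RGT_0; generalize PI2_3_2; lra.
Qed.

Lemma mills x : 0 < x -> x * phi x / (1 + x ^ 2) <= 1/2 - H x.
Proof.
intro hx.
assert (hm : forall y, x < y -> mm y <= mm x).
{ intros y hy.
  destruct (MVT_gen mm x y (fun y => - 2 * phi y / (1 + y ^ 2) ^ 2)) as [xi [hxi E]].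
  - intros; apply mm_derive.
  - intros z _. apply continuity_pt_filterlim.
    apply (ex_derive_continuous (K:=R_AbsRing) (V:=R_NormedModule)).
    eexists; apply mm_derive.
  - assert (p0 : 0 < phi xi) by apply phi_pos.
    assert (q0 : 0 < (1 + xi ^ 2) ^ 2) by (apply pow_lt; nra).
    assert (r0 : 0 <= 2 * phi xi / (1 + xi ^ 2) ^ 2).
    { unfold Rdiv. apply Rmult_le_pos; [lra|]. left. apply Rinv_0_lt_compat; auto. }
    unfold Rdiv in E, r0. nra. }
assert (mx : mm x >= 0).
{ apply Rnot_lt_ge. intro hneg.
  set (e := - mm x).
  assert (e0 : 0 < e) by (unfold e; lra).
  destruct (H_lim (e/2)) as [M HM]; [lra|].
  set (y := Rmax (Rmax (x + 1) (M + 1)) (2 / e + 1)).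
  assert (y1 : x + 1 <= y) by (unfold y; generalize (Rmax_l (Rmax (x+1) (M+1)) (2/e+1)), (Rmax_l (x+1) (M+1)); lra).
  assert (y2 : M + 1 <= y) by (unfold y; generalize (Rmax_l (Rmax (x+1) (M+1)) (2/e+1)), (Rmax_r (x+1) (M+1)); lra).
  assert (y3 : 2 / e + 1 <= y) by (unfold y; apply Rmax_r).
  assert (hy : mm y <= mm x) by (apply hm; lra).
  assert (hMy : Rabs (H y - 1/2) < e/2) by (apply HM; lra).
  assert (ha := Rabs_def2 _ _ hMy).
  assert (p0 : 0 < phi y) by apply phi_pos.
  assert (p1 : phi y <= 1) by (generalize (phi_le_c y), c_le1; lra).
  assert (ey : 2 <= e * y).
  { assert (e * (2 / e) = 2) by (field; lra). nra. }
  assert (t1 : y * phi y / (1 + y ^ 2) < e / 2).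
  { assert (ypos : 1 < y) by lra.
    assert (h1 : y * phi y <= y) by nra.
    assert (h2 : 2 * y <= e * y * y) by nra.
    assert (yy : y * phi y < e / 2 * (1 + y ^ 2)) by (simpl; nra).
    apply Rlt_div_l; nra. }
  assert (mmy : mm y = 1/2 - H y - y * phi y / (1 + y ^ 2)) by reflexivity.
  destruct ha as [ha1 ha2]. unfold e in *. lra. }
unfold mm in mx. lra.
Qed.

Lemma H_nonneg x : 0 <= x -> 0 <= H x.
Proof.
intro hx. apply RInt_ge_0; auto. apply phi_ex. intros y _. left; apply phi_pos.
Qed.

Lemma H_le x : 0 <= x -> H x <= / sqrt (2 * PI) * x.
Proof.
intro hx. unfold H.
replace (/ sqrt (2 * PI) * x) with (RInt (fun _ => / sqrt (2 * PI)) 0 x).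
- apply RInt_le; auto. apply phi_ex.
  apply (ex_RInt_continuous (V:=R_CompleteNormedModule)). intros. apply continuous_const.
  intros y _. apply phi_le_c.
- rewrite (RInt_const (V:=R_CompleteNormedModule)). unfold scal; simpl. unfold mult; simpl. ring.
Qed.

Lemma PI_lt : PI < 347 / 100.
Proof.
destruct (PI_ineq 1) as [_ h]. simpl in h. unfold tg_alt, PI_tg in h. simpl in h. lra.
Qed.

Lemma PI_gt : 3 < PI.
Proof. generalize PI2_3_2; lra. Qed.

Lemma c_ge : / (264/100) <= / sqrt (2 * PI).
Proof.
apply Rinv_le_contravar. apply s2PI_pos.
rewrite <- (sqrt_square (264/100)) by lra. apply sqrt_le_1_alt.
generalize PI_lt; lra.
Qed.

Lemma exp_up u : 0 <= u -> exp (- u) * (1 + u) <= 1.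
Proof.
intro hu. assert (e := exp_ineq1_le u).
assert (e2 : exp (- u) * exp u = 1) by (rewrite <- exp_plus; replace (- u + u) with 0 by ring; apply exp_0).
assert (p := exp_pos (- u)). nra.
Qed.

Lemma exp_low u : 0 <= u <= 1 -> (1 - u / 4) ^ 4 <= exp (- u).
Proof.
intro hu.
replace (- u) with (- u/4 + (- u/4 + (- u/4 + - u/4))) by field.
rewrite !exp_plus. simpl.
assert (e := exp_ineq1_le (- u / 4)).
assert (a : 0 <= 1 - u / 4) by lra.
rewrite Rmult_1_r.
apply Rmult_le_compat; try lra; [apply Rmult_le_pos; try lra; apply Rmult_le_pos; lra|].
apply Rmult_le_compat; try lra; [apply Rmult_le_pos; lra|].
apply Rmult_le_compat; lra.
Qed.

Lemma region2 x : 22/25 <= x -> 1 - x ^ 4 < 2 * x * phi x.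
Proof.
intro hx.
assert (p0 := phi_pos x).
destruct (Rle_lt_dec 1 x) as [h1|h1].
{ assert (h4 : 1 <= x ^ 4) by (apply pow_R1_Rle; lra). assert (h5 : 0 < x * phi x) by (apply Rmult_lt_0_compat; lra). lra. }
assert (pE : phi x = / sqrt (2 * PI) * exp (- (x ^ 2 / 2))).
{ unfold phi. replace (- x ^ 2 / 2) with (- (x ^ 2 / 2)) by field. unfold Rdiv. ring. }
assert (El := exp_low (x ^ 2 / 2)).
assert (cg := c_ge).
assert (x2 : x ^ 2 / 2 <= 1) by (simpl; nra).
assert (El' : (1 - x ^ 2 / 2 / 4) ^ 4 <= exp (- (x ^ 2 / 2))) by (apply El; split; [simpl; nra | exact x2]).
set (E := exp (- (x ^ 2 / 2))) in *.
set (c := / sqrt (2 * PI)) in *.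
destruct (Rle_lt_dec x (92/100)) as [h2|h2].
- assert (q0 : 8942/10000 <= 1 - x ^ 2 / 2 / 4) by (simpl; nra).
  assert (q4 : (8942/10000) ^ 4 <= (1 - x ^ 2 / 2 / 4) ^ 4) by (apply pow_incr; lra).
  assert (x4 : (88/100)^4 <= x ^ 4) by (apply pow_incr; lra).
  assert (cE : / (264/100) * (8942/10000) ^ 4 <= c * E).
  { apply Rmult_le_compat; try lra. }
  rewrite pE. simpl in *. nra.
- assert (q0 : 875/1000 <= 1 - x ^ 2 / 2 / 4) by (simpl; nra).
  assert (q4 : (875/1000) ^ 4 <= (1 - x ^ 2 / 2 / 4) ^ 4) by (apply pow_incr; lra).
  assert (x4 : (92/100)^4 <= x ^ 4) by (apply pow_incr; lra).
  assert (cE : / (264/100) * (875/1000) ^ 4 <= c * E).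
  { apply Rmult_le_compat; try lra. }
  rewrite pE. simpl in *. nra.
Qed.

Lemma key x : 0 < x -> 4 * x * H x ^ 2 + 4 * phi x * H x < x.
Proof.
intro hx.
assert (A0 := H_nonneg x (Rlt_le _ _ hx)).
assert (Ac := H_le x (Rlt_le _ _ hx)).
assert (p0 := phi_pos x).
assert (p1 : phi x <= 1) by (generalize (phi_le_c x), c_le1; lra).
set (A := H x) in *. set (p := phi x) in *.
destruct (Rle_lt_dec x (22/25)) as [hs|hs].
- assert (pE : p = / sqrt (2 * PI) * exp (- (x ^ 2 / 2))).
  { unfold p, phi. replace (- x ^ 2 / 2) with (- (x ^ 2 / 2)) by field. unfold Rdiv. ring. }
  assert (Eu := exp_up (x ^ 2 / 2)).
  assert (Ep := exp_pos (- (x ^ 2 / 2))).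
  assert (c2 : / sqrt (2 * PI) * / sqrt (2 * PI) = / (2 * PI)).
  { rewrite <- Rinv_mult. rewrite sqrt_sqrt; auto. generalize PI_RGT_0; lra. }
  assert (k6 : / (2 * PI) < 1 / 6).
  { unfold Rdiv. rewrite Rmult_1_l. apply Rinv_lt_contravar; generalize PI_gt; lra. }
  assert (cp : 0 < / sqrt (2 * PI)) by (apply Rinv_0_lt_compat, s2PI_pos).
  set (E := exp (- (x ^ 2 / 2))) in *.
  set (c := / sqrt (2 * PI)) in *.
  set (k := / (2 * PI)) in *.
  assert (Eu' : E * (1 + x ^ 2 / 2) <= 1) by (apply Eu; simpl; nra).
  assert (xE : x ^ 2 + E < 3 / 2).
  { assert (x2 : x ^ 2 <= (22/25)^2) by (apply pow_incr; lra).
    simpl in *. nra. }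
  assert (b1 : A ^ 2 <= (c * x) ^ 2) by (apply pow_incr; lra).
  assert (b2 : x * A ^ 2 <= x * (c * x) ^ 2) by (apply Rmult_le_compat_l; lra).
  assert (b3 : p * A <= c * E * (c * x)) by (rewrite pE; apply Rmult_le_compat_l; nra).
  assert (kp : 0 < k) by (unfold k; apply Rinv_0_lt_compat; generalize PI_RGT_0; lra).
  assert (b4 : 4 * x * A ^ 2 + 4 * p * A <= 4 * k * x * (x ^ 2 + E)).
  { replace k with (c * c) by exact c2. simpl in *. nra. }
  assert (b5 : 4 * k * (x ^ 2 + E) < 1) by nra.
  nra.
- assert (R2 := region2 x (Rlt_le _ _ hs)). fold p in R2.
  assert (Mi := mills x hx). fold p A in Mi.
  set (t := 1/2 - A) in *.
  set (L := x * p / (1 + x ^ 2)) in *.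
  assert (Lp : L * (1 + x ^ 2) = x * p) by (unfold L; field; nra).
  assert (L0 : 0 < L) by (unfold L; apply Rdiv_lt_0_compat; nra).
  assert (xp : 2 * x * p <= (1 + x ^ 2) * p).
  { assert (sq : 0 <= (x - 1) ^ 2 * p) by (apply Rmult_le_pos; [apply pow2_ge_0|lra]).
    simpl in *. nra. }
  assert (Lh2 : 2 * L <= p).
  { apply (Rmult_le_reg_r (1 + x ^ 2)); [simpl; nra|]. nra. }
  assert (Lh : L <= 1/2) by lra.
  assert (gL : p < 2 * L * (x * (1 - L) + p)).
  { assert (id : 2 * L * (x * (1 - L) + p) - p = p * (x ^ 4 - 1 + 2 * x * p) / (1 + x ^ 2) ^ 2)
      by (unfold L; field; nra).
    assert (pos : 0 < p * (x ^ 4 - 1 + 2 * x * p) / (1 + x ^ 2) ^ 2).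
    { apply Rdiv_lt_0_compat. apply Rmult_lt_0_compat; lra. apply pow_lt; nra. }
    lra. }
  assert (f1 : 0 <= t - L) by lra.
  assert (tl : t <= 1/2) by (unfold t; lra).
  assert (f2 : 0 <= x + p - x * (t + L)) by nra.
  assert (f3 : 0 <= (t - L) * (x + p - x * (t + L))) by (apply Rmult_le_pos; lra).
  assert (gt : 2 * L * (x * (1 - L) + p) <= 2 * t * (x * (1 - t) + p)).
  { assert (id2 : 2 * t * (x * (1 - t) + p) - 2 * L * (x * (1 - L) + p) = 2 * ((t - L) * (x + p - x * (t + L)))) by ring.
    lra. }
  replace A with (1/2 - t) by (unfold t; ring).
  nra.
Qed.

Theorem lemma16 : forall x : R, 0 < x ->
  l x * (1 / 2 - Phi (- x)) / x < 1 / 2.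
Proof.
intros x hx.
assert (K := key x hx).
assert (PhiE : Phi (- x) = - H x + 1 / 2) by (rewrite Phi_eq, H_odd; reflexivity).
unfold l. rewrite PhiE.
set (A := H x) in *. set (p := phi x) in *.
apply Rlt_div_l; [lra|].
replace ((x * (1 - 2 * (- A + 1 / 2)) + 2 * p) * (1 / 2 - (- A + 1 / 2)))
  with ((4 * x * A ^ 2 + 4 * p * A) / 2) by field.
lra.
Qed.
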